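(* Let $(G,E)$ be a connected simple graph with countable vertex set, $\mu$ a conductance, and $d$ a metric on $G$. Assume (E($\beta$)): there is $r_0>0$ with $\mathbb{E}^x[\tau(x,r)]\asymp r^\beta$ for all $x\in G$ and $r>r_0$; and (VG($\alpha$)): $V_d(x,r)\le C(r/s)^\alpha V_d(x,s)$ for all $x$ and $r>s>0$. Then there exists $c>0$ such that $h_{2n}(x,x)\ge c/V_d(x,n^{1/\beta})$ for all $x\in G$ and $n\ge1$.
   Context: $\mu_x=\sum_{y\sim x}\mu_{xy}$, $V_d(x,r)=\sum_{y\in B_d(x,r)}\mu_y$. $(X_n)$ is the random walk with transition probabilities $p(x,y)=\mu_{xy}/\mu_x$, $\mathbb{P}^x,\mathbb{E}^x$ its law and expectation started at $x$, $p_n(x,y)=\mathbb{P}^x(X_n=y)$, $h_n(x,y)=p_n(x,y)/\mu_y$. $\tau(x,r)=\min\{n:X_n\notin B_d(x,r)\}$. *)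

(* Defs.v *)
From mathcomp Require Import all_boot all_order all_algebra.
From mathcomp Require Import all_classical all_reals all_analysis.
Set Implicit Arguments. Unset Strict Implicit. Unset Printing Implicit Defensive.
Import Order.TTheory GRing.Theory Num.Theory.
Local Open Scope classical_set_scope.
Local Open Scope ring_scope.

Section Walk.
Variables (R : realType) (V : countType).

Inductive reach (E : V -> V -> Prop) : V -> V -> Prop :=
| reach_refl x : reach E x x
| reach_step x y z : E x y -> reach E y z -> reach E x z.

Definition simple_graph (E : V -> V -> Prop) : Prop :=
  (forall x, ~ E x x) /\ (forall x y, E x y -> E y x).

Definition connected_graph (E : V -> V -> Prop) : Prop :=
  forall x y, reach E x y.

Definition conductance (E : V -> V -> Prop) (mu : V -> V -> R) : Prop :=
  (forall x y, mu x y = mu y x) /\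
  (forall x y, E x y -> 0 < mu x y) /\
  (forall x y, ~ E x y -> mu x y = 0).

Definition is_metric (d : V -> V -> R) : Prop :=
  (forall x y, 0 <= d x y) /\ (forall x y, d x y = 0 <-> x = y) /\
  (forall x y, d x y = d y x) /\ (forall x y z, d x z <= d x y + d y z).

Definition muv (E : V -> V -> Prop) (mu : V -> V -> R) (x : V) : \bar R :=
  \esum_(y in [set y | E x y]) (mu x y)%:E.

Definition ball_d (d : V -> V -> R) (x : V) (r : R) : set V :=
  [set y | d x y < r].

Definition vol (E : V -> V -> Prop) (mu : V -> V -> R) (d : V -> V -> R)
  (x : V) (r : R) : \bar R :=
  \esum_(y in ball_d d x r) muv E mu y.

Definition ptrans (E : V -> V -> Prop) (mu : V -> V -> R) (x y : V) : \bar R :=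
  ((mu x y)%:E / muv E mu x)%E.

Fixpoint pn (E : V -> V -> Prop) (mu : V -> V -> R) (n : nat) (x y : V)
  : \bar R :=
  match n with
  | 0 => (if `[< x = y >] then 1 else 0)%E
  | m.+1 => \esum_(z in [set: V]) (ptrans E mu x z * pn E mu m z y)%E
  end.

Definition hn (E : V -> V -> Prop) (mu : V -> V -> R) (n : nat) (x y : V)
  : \bar R := (pn E mu n x y / muv E mu y)%E.

Fixpoint stay (E : V -> V -> Prop) (mu : V -> V -> R) (B : set V) (n : nat)
  (z : V) : \bar R :=
  match n with
  | 0 => (if `[< B z >] then 1 else 0)%E
  | m.+1 => (if `[< B z >] then
               \esum_(w in [set: V]) (ptrans E mu z w * stay E mu B m w)
             else 0)%E
  end.

(* E^x[tau(x,r)] with tau(x,r) = min{n : X_n notin B_d(x,r)}, an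
   N u {oo}-valued variable, so E^x[tau] = sum_{n>=0} P^x(tau > n)
   and {tau > n} = {X_0,...,X_n in B_d(x,r)}. *)
Definition exit_time_mean (E : V -> V -> Prop) (mu : V -> V -> R)
  (d : V -> V -> R) (x : V) (r : R) : \bar R :=
  \esum_(n in [set: nat]) stay E mu (ball_d d x r) n x.

End Walk.

(* Main.v *)
Require Import Defs.
From mathcomp Require Import all_boot all_order all_algebra.
From mathcomp Require Import all_classical all_reals all_analysis.
From mathcomp Require Import ring lra.
Import Order.TTheory GRing.Theory Num.Theory.
Local Open Scope classical_set_scope.
Local Open Scope ring_scope.
Local Open Scope ereal_scope.

Lemma esumZl (R : realType) (T : choiceType) (I : set T) (a : T -> \bar R) (c : R) :
  (0 <= c)%R -> (forall i, I i -> 0 <= a i) ->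
  \esum_(i in I) (c%:E * a i) = c%:E * \esum_(i in I) a i.
Proof.
move=> c0 a0; rewrite /esum -ereal_supZl //; last first.
  by apply/set0P; exists 0; exists set0; [exact: fsets_set0|rewrite fsbig_set0].
have key X : fsets I X -> \sum_(i \in X) (c%:E * a i) = c%:E * \sum_(i \in X) a i.
  case=> finX XI; rewrite !fsbig_finite//= big_seq [in RHS]big_seq ge0_sume_distrr//.
  by move=> i; rewrite in_fset_set// inE => /XI /a0.
congr ereal_sup; apply/seteqP; split => x /=.
  move=> [X XI <-]; exists (\sum_(i \in X) a i); first by exists X.
  by rewrite key.
by move=> [_ [X XI <-] <-]; exists X => //; rewrite key.
Qed.

Lemma esumZr (R : realType) (T : choiceType) (I : set T) (a : T -> \bar R) (c : R) :
  (0 <= c)%R -> (forall i, I i -> 0 <= a i) ->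
  \esum_(i in I) (a i * c%:E) = (\esum_(i in I) a i) * c%:E.
Proof.
move=> c0 a0; rewrite muleC -esumZl//; apply: eq_esum => i _; by rewrite muleC.
Qed.

Lemma esum_swap (R : realType) (T1 T2 : choiceType) (I : set T1) (J : set T2)
  (a : T1 -> T2 -> \bar R) : (forall i j, I i -> J j -> 0 <= a i j) ->
  \esum_(i in I) \esum_(j in J) a i j = \esum_(j in J) \esum_(i in I) a i j.
Proof.
move=> a0; rewrite (@esum_esum _ _ _ I (fun=> J))// (@esum_esum _ _ _ J (fun=> I)); last first.
  by move=> i j Ji Ij; exact: a0.
rewrite (reindex_esum (J `*` I) _ (fun x => (x.2, x.1)))//; split=> //=.
- by move=> [i j] [/=].
- by move=> [i1 i2] [j1 j2] /= _ _ [] -> ->.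
- by move=> [i1 i2] [Pi1 Qi2] /=; exists (i2, i1).
Qed.

Lemma esum_delta (R : realType) (T : choiceType) (x : T) (f : T -> \bar R) :
  (forall i, 0 <= f i) ->
  \esum_(z in [set: T]) ((if `[< x = z >] then 1 else 0) * f z) = f x.
Proof.
move=> f0; rewrite (esumID [set x]); last by move=> i _; case: asboolP; rewrite ?mul1e ?mul0e.
rewrite setTI esum_set1; last by rewrite asboolT ?mul1e.
rewrite asboolT // mul1e esum1 ?adde0// => i [_ /= ix].
by rewrite asboolF ?mul0e// => xi; apply: ix; rewrite xi.
Qed.

Lemma esum_delta' (R : realType) (T : choiceType) (x : T) (f : T -> \bar R) :
  (forall i, 0 <= f i) ->
  \esum_(z in [set: T]) (f z * (if `[< z = x >] then 1 else 0)) = f x.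
Proof.
move=> f0; rewrite -(@esum_delta _ _ x f f0); apply: eq_esum => z _.
rewrite muleC; congr (_ * _); case: asboolP => [->|h]; first by rewrite asboolT.
by rewrite asboolF // => e; apply: h.
Qed.

Lemma esum_ge1 (R : realType) (T : choiceType) (I : set T) (f : T -> \bar R) x :
  I x -> f x <= \esum_(i in I) f i.
Proof.
move=> Ix; apply: esum_ge; exists [set x]; last by rewrite fsbig_set1.
by split; [exact: finite_set1| move=> y ->].
Qed.


Lemma CS (R : realFieldType) (I : Type) (s : seq I) (a m : I -> R) :
  (forall i, 0 < m i)%R ->
  ((\sum_(i <- s) a i) ^+ 2 <= (\sum_(i <- s) (a i ^+ 2 / m i)) * \sum_(i <- s) m i)%R.
Proof.
move=> m0.
case: s => [|i0 s0]; first by rewrite !big_nil expr0n /= mulr0.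
set A := (\sum_(i <- _) a i)%R; set Q := (\sum_(i <- _) (a i ^+ 2 / m i))%R.
set M := (\sum_(i <- _) m i)%R.
have Mpos : (0 < M)%R.
  rewrite /M big_cons; apply: (lt_le_trans (m0 i0)); rewrite lerDl.
  by apply: sumr_ge0 => i _; exact: ltW.
set t := (A / M)%R.
have H : (0 <= \sum_(i <- i0 :: s0) m i * (a i / m i - t) ^+ 2)%R.
  by apply: sumr_ge0 => i _; rewrite mulr_ge0 ?sqr_ge0 // ltW.
have E1 : (\sum_(i <- i0 :: s0) m i * (a i / m i - t) ^+ 2 = Q - 2 * t * A + t ^+ 2 * M)%R.
  rewrite /Q /A /M mulr_sumr mulr_sumr -sumrN -!big_split /=.
  apply: eq_bigr => i _.
  have mi : m i != 0%R by rewrite gt_eqF.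
  by field.
rewrite E1 in H.
have tM : (t * M = A)%R by rewrite /t divfK // gt_eqF.
nra.
Qed.

Section walk.
Variables (R : realType) (V : countType) (E : V -> V -> Prop) (mu : V -> V -> R).
Hypothesis mu_ge0 : forall x y, (0 <= mu x y)%R.
Hypothesis mu_sym : forall x y, mu x y = mu y x.
Hypothesis mu_out : forall x y, ~ E x y -> mu x y = 0%R.
Hypothesis muv_gt0 : forall x, 0 < muv E mu x.
Hypothesis muv_fin : forall x, muv E mu x < +oo.

Definition mv x : R := fine (muv E mu x).

Lemma muvE x : muv E mu x = (mv x)%:E.
Proof.
rewrite /mv fineK // ge0_fin_numE ?muv_fin //; exact: ltW.
Qed.

Lemma mv_gt0 x : (0 < mv x)%R.
Proof. by rewrite -lte_fin -muvE. Qed.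

Definition P x y : R := (mu x y / mv x)%R.

Lemma P_ge0 x y : (0 <= P x y)%R.
Proof. by rewrite /P divr_ge0 // ltW // mv_gt0. Qed.

Lemma ptransE x y : ptrans E mu x y = (P x y)%:E.
Proof.
by rewrite /ptrans muvE inver gt_eqF ?mv_gt0 // -EFinM.
Qed.

Lemma esum_mu x : \esum_(z in [set: V]) (mu x z)%:E = (mv x)%:E.
Proof.
rewrite -muvE /muv [RHS]esum_mkcond; apply: eq_esum => z _.
case: ifPn => // /negP; rewrite inE => h; by rewrite mu_out.
Qed.

Lemma sumP x : \esum_(z in [set: V]) (P x z)%:E = 1.
Proof.
under eq_esum do rewrite EFinM.
rewrite esumZr; last by move=> *; rewrite lee_fin.
- by rewrite esum_mu -EFinM divff // gt_eqF // mv_gt0.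
- by rewrite invr_ge0 ltW // mv_gt0.
Qed.

Lemma pn_ge0 n x y : 0 <= pn E mu n x y.
Proof.
elim: n x y => [|n IH] x y /=; first by case: asboolP.
by apply: esum_ge0 => z _; rewrite mule_ge0 // ptransE lee_fin P_ge0.
Qed.

Lemma pn_le1 n x y : pn E mu n x y <= 1.
Proof.
elim: n x y => [|n IH] x y /=; first by case: asboolP.
rewrite -(sumP x); apply: le_esum => z _; rewrite ptransE.
by rewrite -[X in _ <= X]mule1 lee_wpmul2l // lee_fin P_ge0.
Qed.

Lemma pnE n x y : pn E mu n x y = (fine (pn E mu n x y))%:E.
Proof.
rewrite fineK // ge0_fin_numE ?pn_ge0 //; exact: (le_lt_trans (pn_le1 _ _ _) (ltry _)).
Qed.

Lemma CK m k x y :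
  pn E mu (m + k) x y = \esum_(z in [set: V]) (pn E mu m x z * pn E mu k z y).
Proof.
elim: m x y => [|m IH] x y.
  by rewrite add0n /= esum_delta // => i; exact: pn_ge0.
rewrite addSn /=.
transitivity (\esum_(z in [set: V]) \esum_(w in [set: V])
   ((P x z)%:E * (pn E mu m z w * pn E mu k w y))).
  apply: eq_esum => z _; rewrite IH ptransE esumZl ?P_ge0 // => w _.
  by rewrite mule_ge0 // pn_ge0.
rewrite esum_swap; last by move=> *; rewrite !mule_ge0 ?pn_ge0 // lee_fin P_ge0.
apply: eq_esum => w _; rewrite [pn E mu k w y]pnE /= -esumZr; last first.
- by move=> z _; rewrite mule_ge0 ?pn_ge0 // ptransE lee_fin P_ge0.
- by rewrite fine_ge0 // pn_ge0.
by apply: eq_esum => z _; rewrite ptransE muleA.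
Qed.

Lemma pn1 x y : pn E mu 1 x y = ptrans E mu x y.
Proof.
by rewrite /= esum_delta' // => z; rewrite ptransE lee_fin P_ge0.
Qed.

Lemma rev n x y : (mv x)%:E * pn E mu n x y = (mv y)%:E * pn E mu n y x.
Proof.
elim: n x y => [|n IH] x y.
  rewrite /=; case: (pselect (x = y)) => [->//|h].
  by rewrite !asboolF ?mule0 // => e; apply: h.
have -> : pn E mu n.+1 y x = \esum_(z in [set: V]) (pn E mu n y z * ptrans E mu z x).
  by rewrite -addn1 CK; apply: eq_esum => z _; rewrite pn1.
rewrite /= -esumZl; last by move=> *; rewrite mule_ge0 ?pn_ge0 // ptransE lee_fin P_ge0.
2: exact: ltW (mv_gt0 _).
rewrite -esumZl; last by move=> *; rewrite mule_ge0 ?pn_ge0 // ptransE lee_fin P_ge0.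
2: exact: ltW (mv_gt0 _).
apply: eq_esum => z _.
rewrite !ptransE muleA -EFinM /P mulrC divfK ?gt_eqF ?mv_gt0 //.
have e : mu z x = (mu z x / mv z * mv z)%R by rewrite divfK // gt_eqF // mv_gt0.
rewrite mu_sym {1}e EFinM -muleA IH muleCA; congr (_ * _); exact: muleC.
Qed.

Lemma stay_ge0 B n x : 0 <= stay E mu B n x.
Proof.
elim: n x => [|n IH] x /=; first by case: asboolP.
case: asboolP => // _; apply: esum_ge0 => z _.
by rewrite mule_ge0 // ptransE lee_fin P_ge0.
Qed.

Lemma stay_le1 B n x : stay E mu B n x <= 1.
Proof.
elim: n x => [|n IH] x /=; first by case: asboolP.
case: asboolP => // _; rewrite -(sumP x); apply: le_esum => z _; rewrite ptransE.
by rewrite -[X in _ <= X]mule1 lee_wpmul2l // lee_fin P_ge0.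
Qed.

Lemma stayE B n x : stay E mu B n x = (fine (stay E mu B n x))%:E.
Proof.
rewrite fineK // ge0_fin_numE ?stay_ge0 //; exact: (le_lt_trans (stay_le1 _ _ _) (ltry _)).
Qed.

Lemma stay_out B n x : ~ B x -> stay E mu B n x = 0.
Proof. by move=> h; case: n => [|n] /=; rewrite asboolF. Qed.

Lemma stay_mono B B' n x : B `<=` B' -> stay E mu B n x <= stay E mu B' n x.
Proof.
move=> BB'; elim: n x => [|n IH] x /=.
  case: (pselect (B x)) => Bx; first by rewrite !asboolT //; exact: BB'.
  by rewrite asboolF //; case: asboolP.
case: (pselect (B x)) => Bx; last first.
  rewrite asboolF //; case: asboolP => _ //; apply: esum_ge0 => z _.
  by rewrite mule_ge0 ?stay_ge0 // ptransE lee_fin P_ge0.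
rewrite asboolT // asboolT; last exact: BB' Bx.
apply: le_esum => z _; rewrite ptransE; apply: lee_wpmul2l; [by rewrite lee_fin P_ge0|exact: IH].
Qed.

Lemma stay_le_pn B n x : stay E mu B n x <= \esum_(y in B) pn E mu n x y.
Proof.
elim: n x => [|n IH] x /=.
  case: asboolP => Bx; last by apply: esum_ge0 => y _; case: asboolP.
  by apply: le_trans (@esum_ge1 _ _ B (fun y => if `[< x = y >] then 1 else 0) x Bx); rewrite asboolT.
case: asboolP => Bx; last by apply: esum_ge0 => y _; apply: (pn_ge0 n.+1).
apply: (@le_trans _ _ (\esum_(z in [set: V]) \esum_(y in B) ((P x z)%:E * pn E mu n z y))).
  apply: le_esum => z _; rewrite ptransE esumZl ?P_ge0 //; last by move=> *; exact: pn_ge0.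
  by rewrite lee_wpmul2l // lee_fin P_ge0.
rewrite esum_swap; last by move=> *; rewrite mule_ge0 ?pn_ge0 // lee_fin P_ge0.
by apply: le_esum => y _; apply: le_esum => z _; rewrite ptransE.
Qed.

Definition tail B n x := \esum_(k in [set: nat]) stay E mu B (k + n) x.

Lemma tail_step B n x : tail B n x = stay E mu B n x + tail B n.+1 x.
Proof.
rewrite /tail (esumID [set 0%N]); last by move=> *; exact: stay_ge0.
rewrite setTI esum_set1 ?stay_ge0 // add0n; congr (_ + _).
rewrite (reindex_esum [set: nat] _ S); last first.
  split.
  - by move=> k _ /=; split => //.
  - by move=> a b _ _ [].
  - move=> k [_ /= k0]; exists k.-1 => //; rewrite prednK // lt0n; exact/eqP.
by apply: eq_esum => k _; rewrite addSnnS.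
Qed.

Lemma exit_le B n x :
  \esum_(k in [set: nat]) stay E mu B k x <= (n%:R)%:E + tail B n x.
Proof.
elim: n => [|n IH].
  by rewrite add0e /tail; under [X in _ <= X]eq_esum do rewrite addn0.
apply: (le_trans IH); rewrite tail_step addeA leeD2r // -natr1 EFinD leeD2l //.
exact: stay_le1.
Qed.

Lemma tail_bound B (M : R) n x : (0 <= M)%R ->
  (forall y, B y -> \esum_(k in [set: nat]) stay E mu B k y <= M%:E) ->
  tail B n x <= stay E mu B n x * M%:E.
Proof.
move=> M0 hM; elim: n x => [|n IH] x.
  rewrite /tail; under eq_esum do rewrite addn0.
  case: (pselect (B x)) => Bx; first by rewrite /= asboolT // mul1e hM.
  by rewrite esum1 ?stay_out ?mul0e // => k _; rewrite stay_out.
case: (pselect (B x)) => Bx; last first.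
  by rewrite /tail esum1 ?stay_out ?mul0e // => k _; rewrite stay_out.
rewrite /tail.
have -> : \esum_(k in [set: nat]) stay E mu B (k + n.+1) x =
  \esum_(k in [set: nat]) \esum_(w in [set: V])
    ((P x w)%:E * stay E mu B (k + n) w).
  by apply: eq_esum => k _; rewrite addnS /= asboolT //; apply: eq_esum => w _; rewrite ptransE.
rewrite esum_swap; last by move=> *; rewrite mule_ge0 ?stay_ge0 // lee_fin P_ge0.
apply: (@le_trans _ _ (\esum_(w in [set: V]) ((P x w)%:E * (stay E mu B n w * M%:E)))).
  apply: le_esum => w _; rewrite esumZl ?P_ge0 //; last by move=> *; exact: stay_ge0.
  by apply: lee_wpmul2l; [rewrite lee_fin P_ge0|exact: IH].
rewrite /stay -/stay asboolT // -esumZr //; last by move=> *; rewrite mule_ge0 ?stay_ge0 // ptransE lee_fin P_ge0.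
by rewrite le_eqVlt; apply/orP; left; apply/eqP; apply: eq_esum => w _; rewrite ptransE muleA.
Qed.

Lemma hn_eq n x : hn E mu (n + n) x x =
  \esum_(y in [set: V]) ((fine (pn E mu n x y)) ^+ 2 / mv y)%:E.
Proof.
rewrite /hn CK muvE inver gt_eqF ?mv_gt0 // -esumZr; last first.
- by move=> *; rewrite mule_ge0 ?pn_ge0.
- by rewrite invr_ge0 ltW // mv_gt0.
apply: eq_esum => y _.
have r := rev n x y; rewrite (pnE n x y) (pnE n y x) -!EFinM in r.
case: r => r.
rewrite (pnE n x y) (pnE n y x) -!EFinM; congr EFin.
have mx : mv x != 0%R by rewrite gt_eqF // mv_gt0.
have my : mv y != 0%R by rewrite gt_eqF // mv_gt0.
have -> : fine (pn E mu n y x) = (mv x * fine (pn E mu n x y) / mv y)%R.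
  by rewrite r mulrC mulKf.
rewrite /=. set u := fine _. by field; rewrite my mx.
Qed.

Lemma key_lower n x (B : set V) (s0 : R) : (0 < s0)%R ->
  s0%:E < \esum_(y in B) pn E mu n x y ->
  (s0 ^+ 2)%:E <= hn E mu (n + n) x x * \esum_(y in B) muv E mu y.
Proof.
move=> s0p /ereal_sup_gt [_ [X [finX XB] <-]] hX.
set a := fun y => fine (pn E mu n x y).
pose sq := finmap.enum_fset (fset_set X).
have eA : \sum_(y \in X) pn E mu n x y = (\sum_(y <- sq) a y)%R%:E.
  rewrite fsbig_finite //= -sumEFin; apply: eq_bigr => y _; exact: pnE.
rewrite eA lte_fin in hX.
have hQ : (\sum_(y <- sq) (a y ^+ 2 / mv y))%R%:E <= hn E mu (n + n) x x.
  rewrite hn_eq; apply: esum_ge; exists X; first by split.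
  by rewrite fsbig_finite //= sumEFin.
have hM : (\sum_(y <- sq) mv y)%R%:E <= \esum_(y in B) muv E mu y.
  apply: esum_ge; exists X; first by split.
  rewrite fsbig_finite //= (eq_bigr (fun y => (mv y)%:E)) ?sumEFin // => y _; exact: muvE.
apply: le_trans (lee_pmul _ _ hQ hM); last 2 first.
- by rewrite lee_fin sumr_ge0 // => y _; rewrite divr_ge0 ?sqr_ge0 // ltW // mv_gt0.
- by rewrite lee_fin sumr_ge0 // => y _; rewrite ltW // mv_gt0.
rewrite -EFinM lee_fin; apply: le_trans (@CS _ _ sq a mv mv_gt0).
rewrite ler_sqr ?nnegrE; [exact: ltW| exact: ltW| ].
exact: le_trans (ltW s0p) (ltW hX).
Qed.

Lemma hnE n x y : hn E mu n x y = (fine (pn E mu n x y) / mv y)%:E.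
Proof.
by rewrite /hn muvE inver gt_eqF ?mv_gt0 // pnE -EFinM.
Qed.

Lemma exit_bound (B : set V) n x (M : R) : (0 <= M)%R ->
  (forall y, B y -> \esum_(k in [set: nat]) stay E mu B k y <= M%:E) ->
  \esum_(k in [set: nat]) stay E mu B k x <= (n%:R + fine (stay E mu B n x) * M)%:E.
Proof.
move=> M0 hM; apply: le_trans (exit_le B n x) _.
rewrite EFinD leeD2l // EFinM -stayE; exact: tail_bound.
Qed.


Lemma core (d : V -> V -> R) (alpha beta r0 c1 c2 C K : R) :
  is_metric d -> (0 < beta)%R -> (0 < r0)%R -> (0 < c1)%R -> (0 < c2)%R ->
  (0 < C)%R -> (1 < K)%R -> (r0 < K)%R -> (2 <= c1 * K `^ beta)%R ->
  (forall (x : V) (r : R), (r0 < r)%R ->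
       ((c1 * r `^ beta)%:E <= exit_time_mean E mu d x r)%E /\
       (exit_time_mean E mu d x r <= (c2 * r `^ beta)%:E)%E) ->
  (forall (x : V) (r s : R), (0 < s)%R -> (s < r)%R ->
       (vol E mu d x r <= (C * (r / s) `^ alpha)%:E * vol E mu d x s)%E) ->
  forall (x : V) (n : nat), (1 <= n)%N ->
  ((((c1 / (2 * (c2 * 2 `^ beta))) / 2) ^+ 2 / (C * K `^ alpha))%:E
     / vol E mu d x (n%:R `^ beta^-1) <= hn E mu (2 * n) x x)%E.
Proof.
move=> Hmet hb r0p c1p c2p Cp K1 Kr0 Kb HEb HVG x n n1.
set s0 := (c1 / (2 * (c2 * 2 `^ beta)))%R.
set rho := (n%:R `^ beta^-1)%R.
have rho1 : (1 <= rho)%R.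
  have e1 : (1 = 1 `^ beta^-1 :> R)%R by rewrite powR1.
  rewrite /rho [X in (X <= _)%R]e1; apply: ge0_ler_powR; rewrite ?nnegrE ?ler1n //.
  by rewrite invr_ge0 ltW.
set r := (K * rho)%R.
have r0r : (r0 < r)%R by rewrite /r; nra.
have rhor : (rho < r)%R by rewrite /r; nra.
have rb : (r `^ beta = K `^ beta * n%:R)%R.
  rewrite /r powRM ?(ltW (lt_trans ltr01 K1)) ?(le_trans ler01 rho1) //.
  by rewrite /rho -powRrM mulVf ?gt_eqF // powRr1.
have rp : (0 < r)%R by apply: lt_trans r0p r0r.
set Bx := ball_d d x r.
set M := (c2 * (2 * r) `^ beta)%R.
have M0 : (0 <= M)%R by rewrite mulr_ge0 ?powR_ge0 // ltW.
have hM : forall y, Bx y -> \esum_(k in [set: nat]) stay E mu Bx k y <= M%:E.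
  move=> y Bxy; apply: le_trans (HEb y (2 * r)%R _).2; last by nra.
  apply: le_esum => k _; apply: stay_mono => z Bxz.
  case: Hmet => _ [_ [dsym dtri]].
  rewrite /ball_d /=; apply: le_lt_trans (dtri y x z) _.
  by rewrite dsym; move: Bxy Bxz; rewrite /Bx /ball_d /= => h1 h2; lra.
have hex := @exit_bound Bx n x M M0 hM.
have hlow := (HEb x r r0r).1.
set sig := fine (stay E mu Bx n x).
have hreal : (c1 * r `^ beta <= n%:R + sig * M)%R.
  by rewrite -lee_fin; apply: le_trans hlow hex.
have sig_s0 : (s0 <= sig)%R.
  have hP : (0 < r `^ beta)%R by apply: powR_gt0.
  have M2 : (M = c2 * 2 `^ beta * r `^ beta)%R by rewrite /M powRM ?ler0n ?(ltW rp) // mulrA.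
  have h2n : (2 * n%:R <= c1 * r `^ beta)%R.
    by rewrite rb mulrA ler_pM2r // ltr0n.
  have t0 : (0 < c2 * 2 `^ beta)%R by rewrite mulr_gt0 ?powR_gt0.
  have h3 : (c1 * r `^ beta <= (2 * (sig * (c2 * 2 `^ beta))) * r `^ beta)%R.
    rewrite M2 in hreal.
    have -> : (2 * (sig * (c2 * 2 `^ beta)) * r `^ beta = 2 * (sig * (c2 * 2 `^ beta * r `^ beta)))%R by ring.
    lra.
  rewrite ler_pM2r // in h3.
  rewrite /s0 ler_pdivrMr ?mulr_gt0 //; nra.
have s0p : (0 < s0)%R by rewrite /s0 divr_gt0 // !mulr_gt0 // powR_gt0.
have hPB : (s0 / 2)%:E < \esum_(y in Bx) pn E mu n x y.
  apply: lt_le_trans (stay_le_pn Bx n x); rewrite stayE -/sig lte_fin.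
  by apply: lt_le_trans sig_s0; rewrite ltr_pdivrMr //; lra.
have s02 : (0 < s0 / 2)%R by rewrite divr_gt0.
have key := key_lower n x Bx (s0 / 2) s02 hPB.
rewrite addnn -mul2n in key.
have rhop : (0 < rho)%R by apply: lt_le_trans ltr01 rho1.
have hvg := HVG x r rho rhop rhor.
rewrite /r mulfK ?gt_eqF // in hvg.
rewrite hnE in key *.
set hr := (fine (pn E mu (2 * n) x x) / mv x)%R in key *.
have hr0 : (0 <= hr)%R by rewrite /hr divr_ge0 ?fine_ge0 ?pn_ge0 // ltW // mv_gt0.
have v0 : 0 <= vol E mu d x rho by apply: esum_ge0 => y _; exact: ltW (muv_gt0 y).
have vx : muv E mu x <= vol E mu d x rho.
  apply: esum_ge1; rewrite /ball_d /=; case: Hmet => _ [dxx _].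
  by rewrite (proj2 (dxx x x) erefl).
move: v0 vx hvg; case: (vol E mu d x rho) => [v| |] v0 vx hvg //.
  rewrite muvE lee_fin in vx.
  have vp : (0 < v)%R by apply: lt_le_trans (mv_gt0 x) vx.
  rewrite inver gt_eqF // -EFinM lee_fin ler_pdivrMr //.
  have h1 : ((s0 / 2) ^+ 2)%:E <= hr%:E * ((C * K `^ alpha) * v)%:E.
    apply: le_trans key _; rewrite EFinM; apply: lee_wpmul2l; first by rewrite lee_fin.
    by rewrite /vol; exact: hvg.
  rewrite -EFinM lee_fin in h1.
  rewrite ler_pdivrMr ?mulr_gt0 ?powR_gt0 //; last by apply: lt_trans ltr01 K1.
  by apply: le_trans h1 _; rewrite le_eqVlt; apply/orP; left; apply/eqP; ring.
by rewrite invey mule0 lee_fin.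
Qed.

End walk.

Local Close Scope ereal_scope.

Lemma degenerate {R : realType} {V : countType} {E : V -> V -> Prop} {mu : V -> V -> R}
  (d : V -> V -> R) (x : V) (r : R) :
  simple_graph E -> conductance E mu -> (forall y : V, y = x) ->
  (exit_time_mean E mu d x r <= 1)%E.
Proof.
move=> [Eirr _] [_ [_ Hout]] all.
have mu0 a b : mu a b = 0.
  apply: Hout => Eab; rewrite (all a) (all b) in Eab; exact: (Eirr x Eab).
have pt0 a b : ptrans E mu a b = 0%E by rewrite /ptrans mu0 mul0e.
have st k z : stay E mu (ball_d d x r) k.+1 z = 0%E.
  rewrite /=; case: asboolP => // _; apply: esum1 => w _; by rewrite pt0 mul0e.
rewrite /exit_time_mean (esumID [set 0%N]); last first.
  by move=> [|k] _; [rewrite /=; case: asboolP | rewrite st].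
rewrite setTI esum_set1; last by rewrite /=; case: asboolP.
rewrite esum1 ?adde0; first by rewrite /=; case: asboolP.
by move=> [|k] [_ /= h]; [exfalso; exact: h | exact: st].
Qed.

Lemma has_nbr {V : countType} {E : V -> V -> Prop} {x y} : reach E x y -> x <> y -> exists z, E x z.
Proof. by case => [z|a z w Eaz _] h; [|exists z]. Qed.

Theorem proposition6p3 (R : realType) (V : countType)
  (E : V -> V -> Prop) (mu : V -> V -> R) (d : V -> V -> R)
  (alpha beta : R) :
  simple_graph E -> connected_graph E -> conductance E mu ->
  (forall x : V, (muv E mu x < +oo)%E) ->
  is_metric d ->
  0 < beta ->
  (* E(beta) *)
  (exists r0 : R, 0 < r0 /\ exists c1 c2 : R, 0 < c1 /\ 0 < c2 /\
     forall (x : V) (r : R), r0 < r ->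
       ((c1 * r `^ beta)%:E <= exit_time_mean E mu d x r)%E /\
       (exit_time_mean E mu d x r <= (c2 * r `^ beta)%:E)%E) ->
  (* VG(alpha) *)
  (exists C : R, 0 < C /\
     forall (x : V) (r s : R), 0 < s -> s < r ->
       (vol E mu d x r <= (C * (r / s) `^ alpha)%:E * vol E mu d x s)%E) ->
  exists c : R, 0 < c /\
    forall (x : V) (n : nat), (1 <= n)%N ->
      (c%:E / vol E mu d x (n%:R `^ beta^-1) <= hn E mu (2 * n) x x)%E.
Proof.
move=> HE Hconn Hcond Hfin Hmet hb [r0 [r0p [c1 [c2 [c1p [c2p HEb]]]]]] [C [Cp HVG]].
set K := 1 + r0 + (2 / c1) `^ beta^-1.
have pw0 := powR_ge0 (2 / c1) beta^-1.
have K1 : 1 < K by rewrite /K; lra.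
have Kr0 : r0 < K by rewrite /K; lra.
have Kb : 2 <= c1 * K `^ beta.
  have h : ((2 / c1) `^ beta^-1) `^ beta <= K `^ beta.
    apply: ge0_ler_powR; rewrite ?nnegrE //; try (by apply: ltW); rewrite /K; lra.
  rewrite -powRrM mulVf ?gt_eqF // powRr1 ?divr_ge0 ?(ltW c1p) // in h.
  by rewrite mulrC -ler_pdivrMr.
case: (pselect (exists a b : V, a <> b)) => [[a [b ab]]|nd]; last first.
  exists (1 : R); split; first exact: ltr01.
  move=> x n _; exfalso.
  have all : forall y, y = x by move=> y; apply: contrapT => h; apply: nd; exists y, x.
  have h1 := (HEb x K Kr0).1.
  have h2 := degenerate d x K HE Hcond all.
  have := le_trans h1 h2; rewrite lee_fin; lra.
case: Hcond => mu_sym [mu_pos mu_out].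
have mu_ge0 x y : 0 <= mu x y.
  by case: (pselect (E x y)) => h; [exact: ltW (mu_pos _ _ h) | rewrite mu_out].
have muv_gt0 x : (0 < muv E mu x)%E.
  have [y xy] : exists y, x <> y.
    case: (pselect (x = a)) => [->|xa]; [by exists b | by exists a].
  have [z Exz] := has_nbr (Hconn x y) xy.
  rewrite /muv; apply: lt_le_trans (@esum_ge1 _ _ [set y | E x y] (fun y => (mu x y)%:E) z Exz).
  by rewrite lte_fin; exact: mu_pos.
exists (((c1 / (2 * (c2 * 2 `^ beta))) / 2) ^+ 2 / (C * K `^ alpha)); split.
  by rewrite divr_gt0 ?exprn_gt0 ?divr_gt0 ?mulr_gt0 ?powR_gt0 //; apply: lt_trans K1.
exact: (@core R V E mu mu_ge0 mu_sym mu_out muv_gt0 Hfin d alpha beta r0 c1 c2 C K Hmet hb r0p c1p c2p Cp K1 Kr0 Kb HEb HVG).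
Qed.
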